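(* Let $\mathbf{a}=(a_n)_{n\geq 1}$ be a strong divisibility sequence. Then for every positive integer $n$, \[\mathrm{lcm}(a_1,a_2,\dots,a_n)=\gcd\left\{\binom{n}{k}_{\mathbf{a}}\,\mathrm{lcm}(a_1,\dots,a_k)\;:\; k\in\mathbb{N},\ n/2\leq k\leq n\right\}.\]
   Context: A strong divisibility sequence is a sequence of positive integers $(a_n)_{n\geq1}$ such that $\gcd(a_n,a_m)=a_{\gcd(n,m)}$ for all positive integers $n,m$. For integers $0\leq k\leq n$, the $\mathbf{a}$-binomial coefficient is $\binom{n}{k}_{\mathbf{a}}:=\frac{a_na_{n-1}\cdots a_{n-k+1}}{a_1a_2\cdots a_k}$ (empty products equal $1$); for a strong divisibility sequence these are positive integers. *)

(* Defs.v *)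
From mathcomp Require Import all_boot.
Set Implicit Arguments. Unset Strict Implicit. Unset Printing Implicit Defensive.

(* A sequence (a_n)_{n>=1} is represented by a : nat -> nat; the value a 0
   is irrelevant and never used. *)
Definition strong_div_seq (a : nat -> nat) : Prop :=
  (forall n, 0 < n -> 0 < a n) /\
  (forall n m, 0 < n -> 0 < m -> gcdn (a n) (a m) = a (gcdn n m)).

(* a-binomial coefficient: (a_n a_{n-1} ... a_{n-k+1}) / (a_1 ... a_k),
   defined for 0 <= k <= n (exact division for strong divisibility seqs). *)
Definition abinom (a : nat -> nat) (n k : nat) : nat :=
  (\prod_((n - k).+1 <= i < n.+1) a i) %/ (\prod_(1 <= i < k.+1) a i).

Definition lcm_upto (a : nat -> nat) (k : nat) : nat :=
  \big[lcmn/1]_(1 <= i < k.+1) a i.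

(* Main.v *)
Require Import Defs.
From mathcomp Require Import all_boot.

Lemma term_le_sum m n F i : m <= i < n -> F i <= \sum_(m <= j < n) F j.
Proof.
move=> Hi; rewrite (bigD1_seq i) ?mem_index_iota ?iota_uniq //=; exact: leq_addr.
Qed.

Lemma term_dvd_lcm m n F i : m <= i < n -> F i %| \big[lcmn/1]_(m <= j < n) F j.
Proof.
move=> Hi; rewrite (bigD1_seq i) ?mem_index_iota ?iota_uniq //=; exact: dvdn_lcml.
Qed.

Lemma prod_pos m n F : (forall j, m <= j < n -> 0 < F j) -> 0 < \prod_(m <= j < n) F j.
Proof.
move=> H; rewrite big_seq; apply: (big_ind (fun x => 0 < x)) => // [x y|j].
  by rewrite muln_gt0 => -> ->.
by rewrite mem_index_iota; exact: H.
Qed.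

Lemma lcm_pos m n F : (forall j, m <= j < n -> 0 < F j) -> 0 < \big[lcmn/1]_(m <= j < n) F j.
Proof.
move=> H; rewrite big_seq; apply: (big_ind (fun x => 0 < x)) => // [x y|j].
  by rewrite lcmn_gt0 => -> ->.
by rewrite mem_index_iota; exact: H.
Qed.

Lemma logn_prod p m n F : (forall j, m <= j < n -> 0 < F j) ->
  logn p (\prod_(m <= j < n) F j) = \sum_(m <= j < n) logn p (F j).
Proof.
elim: n => [|n IH] H; first by rewrite !big_geq ?logn1.
case: (leqP m n) => mn; last by rewrite !big_geq ?logn1.
rewrite !big_nat_recr //= lognM ?IH //.
- by move=> j /andP[h1 h2]; apply: H; rewrite h1 ltnS ltnW.
- by apply: prod_pos => j /andP[h1 h2]; apply: H; rewrite h1 ltnS ltnW.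
- by apply: H; rewrite mn ltnSn.
Qed.

Lemma sum_le_log L B : L < B -> \sum_(1 <= e < B) (e <= L) = L.
Proof.
move=> LB; case: L LB => [|L] LB.
  by rewrite big1_seq // => e /andP[_]; rewrite mem_index_iota; case: e.
rewrite (big_cat_nat _ (n := L.+2)) //= [X in _ + X]big1_seq ?addn0.
  rewrite (eq_big_nat _ _ (F2 := fun=> 1)); last by move=> e /andP[_]; rewrite ltnS => ->.
  by rewrite sum_nat_const_nat muln1 subn1.
by move=> e /andP[_]; rewrite mem_index_iota => /andP[h _]; rewrite leqNgt (leq_trans _ h).
Qed.

Lemma logn_expand p x B : prime p -> 0 < x -> logn p x < B ->
  logn p x = \sum_(1 <= e < B) (p ^ e %| x).
Proof.
move=> pp x0 LB; rewrite -{1}(@sum_le_log _ B LB); apply: eq_big_nat => e _.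
by rewrite pfactor_dvdn.
Qed.

Lemma val_dvd x y : 0 < x -> 0 < y ->
  (forall p, prime p -> logn p x <= logn p y) -> x %| y.
Proof.
move=> x0 y0 H; apply/dvdn_partP => // p; rewrite mem_primes => /andP[pp _].
by rewrite p_part pfactor_dvdn // H.
Qed.

Lemma cnt_mult r m : 0 < r -> \sum_(1 <= j < m.+1) (r %| j) = m %/ r.
Proof.
move=> r0; elim: m => [|m IH]; first by rewrite big_geq // div0n.
by rewrite big_nat_recr //= IH (divnS _ r0) addnC.
Qed.

Section Count.
Variable Q : nat -> bool.
Hypothesis Qg : forall j l, 0 < j -> 0 < l -> Q j -> Q l -> Q (gcdn j l).
Hypothesis Qm : forall j l, 0 < j -> j %| l -> 0 < l -> Q j -> Q l.

Lemma count_le k n : k <= n ->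
  \sum_(1 <= j < k.+1) Q j <= \sum_((n - k).+1 <= j < n.+1) Q j.
Proof.
move=> kn.
case: (boolP (has Q (index_iota 1 k.+1))) => [/hasP[j0 Hj0 Qj0]|/hasPn HQ]; last first.
  by rewrite big1_seq // => j /andP[_ /HQ /negbTE ->].
move: Hj0; rewrite mem_index_iota => /andP[j0p _].
have exP : exists j, (0 < j) && Q j by exists j0; rewrite j0p.
case: (ex_minnP exP) => r /andP[r0 Qr] rmin.
have QE : forall j, 0 < j -> Q j = (r %| j).
  move=> j jp; apply/idP/idP => [Qj|rj]; last exact: (@Qm r j r0 rj jp Qr).
  have g0 : 0 < gcdn r j by rewrite gcdn_gt0 r0.
  have Qgj := @Qg r j r0 jp Qr Qj.
  have := rmin _ (introT andP (conj g0 Qgj)).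
  have := dvdn_leq r0 (dvdn_gcdl r j) => h1 h2.
  have e : gcdn r j = r by apply/eqP; rewrite eqn_leq h1 h2.
  by apply/gcdn_idPl.
have sumE : forall lo hi, 0 < lo -> \sum_(lo <= j < hi) Q j = \sum_(lo <= j < hi) (r %| j).
  move=> lo hi lo0; apply: eq_big_nat => j /andP[h _]; rewrite QE //.
  exact: leq_trans lo0 h.
rewrite !sumE // cnt_mult //.
have Hs : \sum_(1 <= j < n.+1) (r %| j) = \sum_(1 <= j < (n - k).+1) (r %| j)
    + \sum_((n - k).+1 <= j < n.+1) (r %| j).
  by rewrite -big_cat_nat // ltnS leq_subr.
move: Hs; rewrite !cnt_mult // => Hs.
have := divnD k (n - k) r0; rewrite subnKC // Hs => Hd.
by rewrite -(leq_add2l ((n - k) %/ r)) Hd [X in X <= _]addnC leq_addr.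
Qed.

Lemma count_le_i k n i (b : bool) : k <= n -> n <= k.*2 -> k < i <= n ->
  (forall j, 0 < j -> j <= k -> Q j -> b) ->
  Q i + \sum_(1 <= j < k.+1) Q j <= \sum_((n - k).+1 <= j < n.+1) Q j + b.
Proof.
move=> kn n2k /andP[ki iin] Hb; case: b Hb => Hb.
  by rewrite addnC leq_add ?leq_b1 ?count_le.
rewrite big1_seq ?addn0; last first.
  move=> j /andP[_]; rewrite mem_index_iota => /andP[j1 jk].
  by case: (Q j) (Hb j j1 jk) => // /(_ isT).
apply: term_le_sum; rewrite ltnS iin andbT.

apply: leq_ltn_trans ki; rewrite leq_subLR addnn; exact: n2k.
Qed.
End Count.

Set Implicit Arguments.
Section Main.
Variable a : nat -> nat.
Hypothesis Ha : strong_div_seq a.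

Lemma a_pos j : 0 < j -> 0 < a j.
Proof. exact: (proj1 Ha). Qed.

Lemma a_dvd j l : 0 < j -> 0 < l -> j %| l -> a j %| a l.
Proof.
move=> j0 l0 jl; have := proj2 Ha j l j0 l0; rewrite (gcdn_idPl jl) => <-.
exact: dvdn_gcdr.
Qed.

Lemma Qg_a p e : forall j l, 0 < j -> 0 < l -> p ^ e %| a j -> p ^ e %| a l ->
  p ^ e %| a (gcdn j l).
Proof. by move=> j l j0 l0 h1 h2; rewrite -(proj2 Ha) // dvdn_gcd h1. Qed.

Lemma Qm_a p e : forall j l, 0 < j -> j %| l -> 0 < l -> p ^ e %| a j -> p ^ e %| a l.
Proof. by move=> j l j0 jl l0 h; apply: (dvdn_trans h); apply: a_dvd. Qed.

Definition Nn k n := \prod_((n - k).+1 <= j < n.+1) a j.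
Definition Dd k := \prod_(1 <= j < k.+1) a j.

Lemma N_pos k n : 0 < Nn k n.
Proof. by apply: prod_pos => j /andP[h _]; apply: a_pos; exact: leq_trans h. Qed.
Lemma D_pos k : 0 < Dd k.
Proof. by apply: prod_pos => j /andP[h _]; apply: a_pos. Qed.
Lemma L_pos k : 0 < lcm_upto a k.
Proof. by apply: lcm_pos => j /andP[h _]; apply: a_pos. Qed.

Lemma expand_sum p B lo hi : prime p -> 0 < lo ->
  (forall j, lo <= j < hi -> logn p (a j) < B) ->
  \sum_(lo <= j < hi) logn p (a j) = \sum_(1 <= e < B) \sum_(lo <= j < hi) (p ^ e %| a j).
Proof.
move=> pp lo0 HB; rewrite exchange_big_nat; apply: eq_big_nat => j hj.
apply: logn_expand => //; last exact: HB.
by apply: a_pos; case/andP: hj => h _; exact: leq_trans h.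
Qed.

Lemma key_setup p k n : prime p -> k <= n ->
  let B := \sum_(1 <= j < n.+1) logn p (a j) + logn p (lcm_upto a k) + 1 in
  (forall j, 1 <= j < n.+1 -> logn p (a j) < B) /\ logn p (lcm_upto a k) < B.
Proof.
move=> pp kn B; split.
  move=> j hj; rewrite /B addn1 ltnS; apply: leq_trans (leq_addr _ _).
  exact: term_le_sum.
by rewrite /B addn1 ltnS leq_addl.
Qed.

Lemma D_dvd_N k n : k <= n -> Dd k %| Nn k n.
Proof.
move=> kn; apply: val_dvd; [exact: D_pos | exact: N_pos | move=> p pp].
have [HB _] := @key_setup p k n pp kn.
set B := (_ + _ + 1) in HB.
rewrite /Dd /Nn !logn_prod; try by move=> j /andP[h _]; apply: a_pos; exact: leq_ltn_trans (leq0n _) h.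
rewrite !(@expand_sum p B _ _ pp) //; try by move=> j /andP[h1 h2]; apply: HB;
  rewrite (leq_ltn_trans (leq0n _) h1) /=; apply: leq_trans h2 _; rewrite ltnS ?leqnn.
apply: leq_sum => e _; apply: count_le => //; [exact: Qg_a | exact: Qm_a].
Qed.

Lemma main_i k n i : k <= n -> n <= k.*2 -> k < i <= n ->
  a i * Dd k %| Nn k n * lcm_upto a k.
Proof.
move=> kn n2k /andP[ki iin].
have i0 : 0 < i by exact: leq_ltn_trans (leq0n k) ki.
apply: val_dvd; [by rewrite muln_gt0 a_pos ?D_pos | by rewrite muln_gt0 N_pos L_pos | move=> p pp].
have [HB HL] := @key_setup p k n pp kn.
set B := (_ + _ + 1) in HB HL.
rewrite !lognM ?a_pos ?D_pos ?N_pos ?L_pos //.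
rewrite /Dd /Nn !logn_prod; try by move=> j /andP[h _]; apply: a_pos; exact: leq_ltn_trans (leq0n _) h.
rewrite !(@expand_sum p B _ _ pp) //; try by move=> j /andP[h1 h2]; apply: HB;
  rewrite (leq_ltn_trans (leq0n _) h1) /=; apply: leq_trans h2 _; rewrite ltnS ?leqnn.
rewrite [logn p (a i)](@logn_expand p _ B pp (@a_pos i i0)); last by apply: HB; rewrite i0 ltnS.
rewrite [logn p (lcm_upto a k)](@logn_expand p _ B pp (@L_pos k) HL).
rewrite -!big_split /=; apply: leq_sum => e _.
apply: count_le_i => //; [exact: Qg_a | exact: Qm_a | exact/andP | ].
move=> j j0 jk h; apply: dvdn_trans h _; apply: term_dvd_lcm; by rewrite j0 ltnS.
Qed.

End Main.
Unset Implicit Arguments.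

Theorem corollary2 (a : nat -> nat) (Ha : strong_div_seq a) (n : nat) (Hn : 0 < n) :
  lcm_upto a n =
  \big[gcdn/0]_(0 <= k < n.+1 | n <= k.*2) (abinom a n k * lcm_upto a k).
Proof.
have Hdiv : forall k, k <= n -> n <= k.*2 -> lcm_upto a n %| abinom a n k * lcm_upto a k.
  move=> k kn n2k.
  have DN := @D_dvd_N a Ha k n kn.
  rewrite {1}/lcm_upto big_seq; apply: (big_ind (fun x => x %| _)) => [|x y|i].
  - exact: dvd1n.
  - by move=> h1 h2; rewrite dvdn_lcm h1.
  rewrite mem_index_iota => /andP[i1 iin].
  case: (leqP i k) => ik.
    by apply: dvdn_mull; apply: term_dvd_lcm; rewrite i1 ltnS.
  have H := @main_i a Ha k n i kn n2k (introT andP (conj ik iin)).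
  change (a i %| Nn a k n %/ Dd a k * lcm_upto a k).
  rewrite -(divnK DN) in H.
  by rewrite -(dvdn_pmul2r (@D_pos a Ha k)) mulnAC.
apply/eqP; rewrite eqn_dvd; apply/andP; split.
  rewrite big_seq_cond; apply: (big_ind (fun x => lcm_upto a n %| x)) => [|x y|k].
  - exact: dvdn0.
  - by move=> h1 h2; rewrite dvdn_gcd h1.
  rewrite mem_index_iota => /andP[/andP[_ kn] n2k]; apply: Hdiv => //.
rewrite big_mkcond big_nat_recr //= -addnn leq_addr.
have -> : abinom a n n = 1.
  rewrite /abinom subnn divnn.
  have := @D_pos a Ha n; rewrite /Dd => -> //.
by rewrite mul1n dvdn_gcdr.
Qed.
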